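(* Let $\mathbf{L}$ be a finite distributive lattice and $m,n\ge1$ integers. Let $\mathbf{D}_{n,m}:=(\mathbf{2}^n)^m$, where $\mathbf{2}^n$ is the Boolean lattice with $n$ atoms, and let $P_{n,m}\subseteq\mathbf{D}_{n,m}$ be the set of tuples $(a_1,\dots,a_m)$ with $a_i\neq 0$ for every $i$. Then a subset $F\subseteq\mathbf{L}$ is an $m$-prime $n$-filter if and only if $F=h^{-1}[P_{n,m}]$ for some lattice homomorphism $h\colon\mathbf{L}\to\mathbf{D}_{n,m}$.
   Context: For a set $X$, $Y\subseteq_n X$ means $Y$ is a non-empty subset of $X$ with $|Y|\le n$. An $n$-filter on a lattice is an upset $F$ such that for every non-empty finite $X\subseteq F$: if $\bigwedge Y\in F$ for every $Y\subseteq_n X$ then $\bigwedge X\in F$. The $n$-filters of $\mathbf{L}$ form a lattice $\mathrm{Fi}_n\mathbf{L}$ under inclusion. An $n$-filter $F$ is $m$-prime if for every non-empty finite family $(F_i)_{i\in I}$ of $n$-filters with $\bigcap_{i\in I}F_i\subseteq F$ there is $J\subseteq I$ with $1\le|J|\le m$ and $\bigcap_{j\in J}F_j\subseteq F$. The empty set and $\mathbf{L}$ count as $m$-prime $n$-filters. Lattice homomorphisms need not preserve bounds. *)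

(* Defs.v *)
From mathcomp Require Import all_boot all_order.
Set Implicit Arguments. Unset Strict Implicit. Unset Printing Implicit Defensive.
Import Order.LTheory.
Local Open Scope order_scope.

Section Defs.
Variables (d : Order.disp_t) (L : finDistrLatticeType d).

(* meet of a finite set X, computed with base element x0 (= meet X when x0 \in X) *)
Definition bigmeet_from (x0 : L) (X : {set L}) : L := \big[Order.meet/x0]_(y in X) y.

(* "the meet of the non-empty set X belongs to F" *)
Definition meet_in (F X : {set L}) : Prop :=
  exists2 x0, x0 \in X & bigmeet_from x0 X \in F.

Definition upset (F : {set L}) : Prop :=
  forall x y : L, x <= y -> x \in F -> y \in F.

Definition nfilter (n : nat) (F : {set L}) : Prop :=
  upset F /\
  forall X : {set L}, X != set0 -> X \subset F ->
    (forall Y : {set L}, Y != set0 -> Y \subset X -> (#|Y| <= n)%N -> meet_in F Y) ->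
    meet_in F X.

(* m-prime n-filter; the empty set and the whole lattice count as such.
   Non-empty finite families are indexed by 'I_k.+1. *)
Definition mprime_nfilter (m n : nat) (F : {set L}) : Prop :=
  F = set0 \/ F = setT \/
  (nfilter n F /\
   forall (k : nat) (Fs : 'I_k.+1 -> {set L}),
     (forall i, nfilter n (Fs i)) ->
     \bigcap_(i : 'I_k.+1) Fs i \subset F ->
     exists J : {set 'I_k.+1}, (0 < #|J| <= m)%N /\ \bigcap_(j in J) Fs j \subset F).
End Defs.

(* D_{n,m} = (2^n)^m, represented as {ffun 'I_m -> {set 'I_n}} with
   componentwise intersection/union as meet/join. *)
Definition Dnm (n m : nat) := {ffun 'I_m -> {set 'I_n}}.

Definition Pnm (n m : nat) : {set Dnm n m} := [set a : Dnm n m | [forall i, a i != set0]].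

(* lattice homomorphisms (bounds not required to be preserved) *)
Definition lattice_hom d (L : finDistrLatticeType d) (n m : nat) (h : L -> Dnm n m) : Prop :=
  (forall x y : L, h (Order.meet x y) = [ffun i => h x i :&: h y i]) /\
  (forall x y : L, h (Order.join x y) = [ffun i => h x i :|: h y i]).

(* Main.v *)
Require Import Defs.
From mathcomp Require Import all_boot all_order.
From Stdlib Require Import Classical ClassicalEpsilon.
Set Implicit Arguments. Unset Strict Implicit. Unset Printing Implicit Defensive.
Import Order.LTheory.
Local Open Scope order_scope.

Section Aux.
Variables (d : Order.disp_t) (L : finDistrLatticeType d).
Implicit Types (x y z : L) (X Y F : {set L}).

Lemma bigmeet_le x0 X y : y \in X -> bigmeet_from x0 X <= y.
Proof.
rewrite /bigmeet_from => yX.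
have : y \in index_enum L by rewrite mem_index_enum.
elim: (index_enum L) => [|a r IH] //=.
rewrite big_cons inE => /orP [/eqP<-|yr].
  by rewrite yX leIl.
case: (a \in X); last exact: IH.
by apply: le_trans (leIr _ _) (IH yr).
Qed.

Lemma le_bigmeet x0 X z : x0 \in X -> (forall y, y \in X -> z <= y) ->
  z <= bigmeet_from x0 X.
Proof.
move=> x0X H; rewrite /bigmeet_from.
apply: (big_ind (fun b => z <= b)); first exact: H.
  by move=> a b za zb; rewrite lexI za zb.
by move=> i; apply: H.
Qed.

Lemma bigmeet_indep x0 x1 X : x0 \in X -> x1 \in X ->
  bigmeet_from x0 X = bigmeet_from x1 X.
Proof.
move=> h0 h1; apply: le_anti; rewrite !le_bigmeet //; move=> y yX; exact: bigmeet_le.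
Qed.

Lemma bigjoin_ge k (xs : 'I_k.+1 -> L) l :
  xs l <= \big[Order.join/xs ord0]_(i : 'I_k.+1) xs i.
Proof.
have : l \in index_enum 'I_k.+1 by rewrite mem_index_enum.
elim: (index_enum 'I_k.+1) => [|a r IH] //=.
rewrite big_cons inE => /orP [/eqP<-|yr].
  by rewrite leUl.
by apply: le_trans (IH yr) (leUr _ _).
Qed.

Definition chom n (g : L -> {set 'I_n}) :=
  (forall a b, g (a `&` b) = g a :&: g b) /\ (forall a b, g (a `|` b) = g a :|: g b).

Definition Gof n (g : L -> {set 'I_n}) : {set L} := [set z | g z != set0].

Lemma chom_le n (g : L -> {set 'I_n}) a b : chom g -> a <= b -> g a \subset g b.
Proof.
move=> [_ hj] ab; move/join_idPr: ab => <-; rewrite hj; exact: subsetUl.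
Qed.

Lemma Gof_nfilter n (g : L -> {set 'I_n}) : (0 < n)%N -> chom g -> nfilter n (Gof g).
Proof.
move=> hn hg; split.
  move=> x y xy; rewrite !inE; apply: contra => /eqP e.
  by apply/eqP; apply/eqP; rewrite -subset0 -e; apply: chom_le.
move=> X X0 XF HY.
case/set0Pn: X0 => x0 x0X; exists x0 => //.
case: (boolP [exists j, [forall x in X, j \in g x]]) => [/existsP [j /forallP Hj]|].
  rewrite inE; apply/set0Pn; exists j.
  rewrite /bigmeet_from; apply: (big_ind (fun c => j \in g c)).
  - by have := Hj x0; rewrite x0X.
  - by move=> a b ja jb; rewrite hg.1 inE ja jb.
  - by move=> i iX; have := Hj i; rewrite iX.
move=> /existsPn Hn.
pose px j := odflt x0 [pick x in X | j \notin g x].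
have pxP j : px j \in X /\ j \notin g (px j).
  rewrite /px; case: pickP => [x /andP[]//|H0] /=.
  exfalso; move: (Hn j) => /forallPn [x]; rewrite negb_imply => /andP[xX jx].
  by move: (H0 x); rewrite xX jx.
pose Y := [set px j | j : 'I_n].
have Yn : Y != set0 by apply/set0Pn; exists (px (Ordinal hn)); apply: imset_f.
have YX : Y \subset X by apply/subsetP => y /imsetP [j _ ->]; exact: (pxP j).1.
have Yc : (#|Y| <= n)%N by rewrite (leq_trans (leq_imset_card _ _)) // card_ord.
case: (HY Y Yn YX Yc) => y0 y0Y; rewrite inE => /set0Pn [j jb].
have : px j \in Y by apply: imset_f.
move=> /(bigmeet_le y0) /(chom_le hg) /subsetP /(_ j jb) jp.
by move: (pxP j).2; rewrite jp.
Qed.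


Lemma Gof_prime n (g : L -> {set 'I_n}) k (Fs : 'I_k.+1 -> {set L}) :
  chom g -> (forall i, upset (Fs i)) -> \bigcap_(i : 'I_k.+1) Fs i \subset Gof g ->
  exists l, Fs l \subset Gof g.
Proof.
move=> hg hu hsub; apply: NNPP => Hn.
have Hx l : exists x, x \in Fs l /\ x \notin Gof g.
  apply: NNPP => H1; apply: Hn; exists l; apply/subsetP => x xF.
  apply: NNPP => xG; apply: H1; exists x; split => //; exact/negP.
pose xs l := proj1_sig (constructive_indefinite_description _ (Hx l)).
have xsP l : xs l \in Fs l /\ xs l \notin Gof g
  := proj2_sig (constructive_indefinite_description _ (Hx l)).
pose zz := \big[Order.join/xs ord0]_(i : 'I_k.+1) xs i.
have zin : zz \in Gof g.
  apply: (subsetP hsub); apply/bigcapP => i _.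
  exact: hu _ _ _ (bigjoin_ge xs i) (xsP i).1.
have : g zz \subset \bigcup_(i : 'I_k.+1) g (xs i).
  rewrite /zz; apply: (big_ind (fun c => g c \subset \bigcup_(i : 'I_k.+1) g (xs i))).
  - by apply: (bigcup_max ord0).
  - by move=> a b ha hb; rewrite hg.2 subUset ha hb.
  - by move=> i _; apply: (bigcup_max i).
move: zin; rewrite inE => /set0Pn [j jz] /subsetP /(_ j jz) /bigcupP [i _ ji].
by move: (xsP i).2; rewrite inE; apply/negP/negPn/set0Pn; exists j.
Qed.

Definition meetprime y := [forall a : L, forall b : L, (a `&` b <= y) ==> (a <= y) || (b <= y)].

Lemma sep x z : ~~ (z <= x) -> exists y, [/\ x <= y, meetprime y & ~~ (z <= y)].
Proof.
move=> zx.
have P0 : (fun y => (x <= y) && ~~ (z <= y)) x by rewrite /= lexx zx.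
case: (@arg_maxnP _ x (fun y => (x <= y) && ~~ (z <= y)) (fun y => #|[set w : L | w <= y]|) P0) => y /andP [xy zy] ymax.
have ymx y' : y <= y' -> ~~ (z <= y') -> y' <= y.
  move=> yy' zy'.
  have := ymax y'; rewrite (le_trans xy yy') zy' => /(_ isT) hc.
  have sub : [set w : L | w <= y] \subset [set w : L | w <= y'].
    by apply/subsetP => w; rewrite !inE => wy; exact: le_trans wy yy'.
  have eqs : [set w : L | w <= y] = [set w : L | w <= y'].
    by apply/eqP; rewrite eqEcard sub; exact: hc.
  have : y' \in [set w : L | w <= y'] by rewrite inE.
  by rewrite -eqs inE.
exists y; split => //.
apply/forallP => a; apply/forallP => b; apply/implyP => aby.
apply: contraT; rewrite negb_or => /andP [ay by_].
have za : z <= y `|` a.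
  apply: contraT => zya; move: (ymx _ (leUl _ _) zya).
  by rewrite leUx lexx /= (negbTE ay).
have zb : z <= y `|` b.
  apply: contraT => zyb; move: (ymx _ (leUl _ _) zyb).
  by rewrite leUx lexx /= (negbTE by_).
have : z <= (y `|` a) `&` (y `|` b) by rewrite lexI za zb.
rewrite -joinIr; move/join_idPl: aby => ->.
by rewrite (negbTE zy).
Qed.


Lemma meetprimeP y a b : meetprime y -> (a `&` b <= y) = (a <= y) || (b <= y).
Proof.
move=> /forallP /(_ a) /forallP /(_ b) /implyP H.
apply/idP/idP; first exact: H.
by case/orP => h; [exact: le_trans (leIl _ _) h | exact: le_trans (leIr _ _) h].
Qed.

Lemma sepG n F x : (0 < n)%N -> nfilter n F -> x \notin F ->
  exists g : L -> {set 'I_n}, [/\ chom g, g x = set0 & F \subset Gof g].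
Proof.
move=> hn [Fup Fn] xF.
case: (set_0Vmem F) => [->|[f fF]].
  exists (fun _ => set0); split => //; last by rewrite sub0set.
  by split => a b; rewrite ?setI0 ?setU0.
have fx : ~~ (f <= x) by apply: contra xF => fx; exact: Fup _ _ fx fF.
pose M := [set y | (x <= y) && meetprime y].
have [y1 [xy1 mp1 _]] := sep fx.
have y1M : y1 \in M by rewrite inE xy1 mp1.
have bx : bigmeet_from y1 M <= x.
  apply: contraT => bnx; have [y' [xy' mp' ny']] := sep bnx.
  by move: ny'; rewrite bigmeet_le // inE xy' mp'.
have bF : bigmeet_from y1 M \notin F by apply: contra xF => bF; exact: Fup _ _ bx bF.
have [Y [Y0 YM Yc YP]] : exists Y, [/\ Y != set0, Y \subset M, (#|Y| <= n)%N &
    forall f, f \in F -> exists2 y, y \in Y & ~~ (f <= y)].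
  case: (boolP (M \subset F)) => MF.
    apply: NNPP => H; move: bF; apply/negP/negPn.
    have [x0 x0M] : meet_in F M.
      apply: Fn => //; first by apply/set0Pn; exists y1.
      move=> Y Y0 YM Yc; apply: NNPP => nmi; apply: H; exists Y; split => //.
      move=> f' f'F; apply: NNPP => H2; apply: nmi.
      case/set0Pn: Y0 => y0 y0Y; exists y0 => //.
      apply: Fup f'F; apply: le_bigmeet => // y yY.
      by apply: contraT => nf; exfalso; apply: H2; exists y.
    by rewrite (bigmeet_indep y1M x0M).
  case/subsetPn: MF => y yM yF.
  exists [set y]; split.
  - by apply/set0Pn; exists y; rewrite inE.
  - by rewrite sub1set.
  - by rewrite cards1.
  - move=> f' f'F; exists y; first by rewrite inE.
    by apply: contra yF => fy; exact: Fup _ _ fy f'F.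
case/set0Pn: Y0 => y0 y0Y.
pose s (j : 'I_n) := nth y0 (enum Y) j.
have sY j : s j \in Y.
  rewrite /s; case: (ltnP j (size (enum Y))) => hj.
    by rewrite -mem_enum mem_nth.
  by rewrite nth_default.
have sM j : s j \in M by exact: (subsetP YM).
exists (fun z => [set j : 'I_n | ~~ (z <= s j)]); split.
- split => a b; apply/setP => j; rewrite !inE.
    move: (sM j); rewrite inE => /andP [_ mp].
    by rewrite meetprimeP // negb_or.
  by rewrite leUx negb_and.
- apply/setP => j; rewrite !inE; move: (sM j); rewrite inE => /andP [-> _] //.
- apply/subsetP => f' f'F; have [y yY nfy] := YP f' f'F.
  have hi : (index y (enum Y) < n)%N.
    by rewrite (leq_trans _ Yc) // cardE index_mem mem_enum.
  rewrite inE; apply/set0Pn; exists (Ordinal hi); rewrite inE /s /= nth_index //.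
  by rewrite mem_enum.
Qed.

End Aux.

Lemma const_chom d (L : finDistrLatticeType d) n (A : {set 'I_n}) : chom (fun _ : L => A).
Proof. by split => a b; rewrite ?setIid ?setUid. Qed.

Lemma Pnm_in n m (a : Dnm n m) : (a \in Pnm n m) = [forall i, a i != set0].
Proof. by rewrite inE. Qed.

Lemma from_hom d (L : finDistrLatticeType d) n m (hn : (0 < n)%N) (hm : (0 < m)%N)
  (h : L -> Dnm n m) (F : {set L}) :
  lattice_hom h -> F = [set x | h x \in Pnm n m] -> mprime_nfilter m n F.
Proof.
move=> [hM hJ] ->; right; right.
pose g (i : 'I_m) := fun z => h z i.
have hg i : chom (g i).
  by split => a b; rewrite /g ?hM ?hJ ffunE.
have memF z : (z \in [set x | h x \in Pnm n m]) = [forall i, z \in Gof (g i)].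
  by rewrite !inE; apply: eq_forallb => i; rewrite inE.
have FG i : [set x | h x \in Pnm n m] \subset Gof (g i).
  by apply/subsetP => z; rewrite memF => /forallP; apply.
split.
  split.
    move=> x y xy; rewrite !memF => /forallP H; apply/forallP => i.
    exact: (Gof_nfilter hn (hg i)).1 _ _ xy (H i).
  move=> X X0 XF HY; case/set0Pn: (X0) => x0 x0X; exists x0 => //.
  rewrite memF; apply/forallP => i.
  have [x1 x1X] := (Gof_nfilter hn (hg i)).2 X X0 (subset_trans XF (FG i))
    (fun Y Y0 YX Yc => let: ex_intro2 y yY yF := HY Y Y0 YX Yc in
       ex_intro2 _ _ y yY (subsetP (FG i) _ yF)).
  by rewrite (bigmeet_indep x0X x1X).
move=> k Fs HFs hsub.
have Hl i : exists l, Fs l \subset Gof (g i).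
  apply: (Gof_prime (hg i)); first by move=> l; exact: (HFs l).1.
  exact: subset_trans hsub (FG i).
pose l i := proj1_sig (constructive_indefinite_description _ (Hl i)).
have lP i : Fs (l i) \subset Gof (g i)
  := proj2_sig (constructive_indefinite_description _ (Hl i)).
exists [set l i | i : 'I_m]; split.
  rewrite card_gt0 (leq_trans (leq_imset_card _ _)) ?card_ord // andbT.
  by apply/set0Pn; exists (l (Ordinal hm)); apply: imset_f.
apply/subsetP => z /bigcapP Hz; rewrite memF; apply/forallP => i.
by apply: (subsetP (lP i)); apply: Hz; apply: imset_f.
Qed.

Close Scope order_scope.

Theorem mainTheorem11 (d : Order.disp_t) (L : finDistrLatticeType d) (n m : nat)
  (hn : 0 < n) (hm : 0 < m) (F : {set L}) :
  mprime_nfilter m n F <->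
  exists h : L -> Dnm n m, lattice_hom h /\ F = [set x | h x \in Pnm n m].
Proof.
split; last by case=> h [hh hF]; exact: (from_hom hn hm hh hF).
have c0 : F = set0 -> exists h : L -> Dnm n m, lattice_hom h /\ F = [set x | h x \in Pnm n m].
  move=> ->; exists (fun _ => [ffun _ => set0]); split.
    by split => a b; apply/ffunP => i; rewrite !ffunE ?setI0 ?setU0.
  apply/setP => z; rewrite !inE; apply/esym/negbTE/forallPn.
  by exists (Ordinal hm); rewrite ffunE eqxx.
have setTn : [set: 'I_n] != set0 by apply/set0Pn; exists (Ordinal hn).
have cT : F = setT -> exists h : L -> Dnm n m, lattice_hom h /\ F = [set x | h x \in Pnm n m].
  move=> ->; exists (fun _ => [ffun _ => setT]); split.
    by split => a b; apply/ffunP => i; rewrite !ffunE ?setIT ?setUT.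
  by apply/setP => z; rewrite !inE; apply/esym/forallP => i; rewrite ffunE.
case=> [/c0 //|[/cT //|[HF HP]]].
case: (set_0Vmem F) => [/c0 //|[f fF]].
have Hg z : exists g : L -> {set 'I_n},
    [/\ chom g, z \notin F -> g z = set0 & F \subset Gof g].
  case: (boolP (z \in F)) => zF.
    exists (fun _ => setT); split => //; first exact: const_chom.
    by apply/subsetP => y _; rewrite inE.
  have [g [g1 g2 g3]] := sepG hn HF zF; by exists g.
pose gs z := proj1_sig (constructive_indefinite_description _ (Hg z)).
have gsP z : [/\ chom (gs z), z \notin F -> gs z z = set0 & F \subset Gof (gs z)]
  := proj2_sig (constructive_indefinite_description _ (Hg z)).
have gs1 z : chom (gs z) by case: (gsP z).
have gs2 z : z \notin F -> gs z z = set0 by case: (gsP z).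
have gs3 z : F \subset Gof (gs z) by case: (gsP z).
pose k := #|L|.-1.
have cL0 : (0 < #|L|)%N by apply/card_gt0P; exists f.
have cL : #|L| = k.+1 by rewrite /k prednK.
pose el (l : 'I_k.+1) := nth f (enum L) l.
pose c l := gs (el l).
pose Fs l := Gof (c l).
have HFs l : nfilter n (Fs l) by apply: Gof_nfilter hn (gs1 _).
have hsub : \bigcap_(l : 'I_k.+1) Fs l \subset F.
  apply/subsetP => z /bigcapP Hz; apply: contraT => zF.
  have hi : (index z (enum L) < k.+1)%N by rewrite -cL cardE index_mem mem_enum.
  have := Hz (inord (index z (enum L))) isT.
  rewrite /Fs /c /el inordK // nth_index ?mem_enum // inE.
  by rewrite (gs2 z zF) eqxx.
have [J [/andP [J0 Jm] hJ]] := HP k Fs HFs hsub.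
have [j0 j0J] : exists j0, j0 \in J by apply/set0Pn; rewrite -card_gt0.
pose sg (i : 'I_m) := nth j0 (enum J) i.
exists (fun z => [ffun i => c (sg i) z]); split.
  split => a b; apply/ffunP => i; rewrite !ffunE.
    by rewrite /c (gs1 _).1.
  by rewrite /c (gs1 _).2.
apply/setP => z; rewrite inE Pnm_in; apply/idP/idP.
  move=> zF; apply/forallP => i; rewrite ffunE.
  by have := subsetP (gs3 (el (sg i))) z zF; rewrite inE.
move=> /forallP H; apply: (subsetP hJ); apply/bigcapP => l lJ.
have hi : (index l (enum J) < m)%N.
  by rewrite (leq_trans _ Jm) // cardE index_mem mem_enum.
have := H (Ordinal hi); rewrite ffunE /sg /= nth_index ?mem_enum //.
by rewrite /Fs inE.
Qed.
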